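(* Let $p\ge 5$ be a prime and $m\in\mathbb{N}$. If there exist $u,v\in\mathbb{Z}$ with $\gcd(u,v)=1$ such that $$u+\delta_4 v=3^m\quad\text{and}\quad H_p(u,v)=1,$$ then $p\equiv 5$ or $11\pmod{24}$.
   Context: For an odd prime $p$ put $\delta_4=1$ if $p\equiv 1\pmod 4$, $\delta_4=-1$ if $p\equiv 3\pmod 4$. Let $G_p(u,v)=\mathrm{Im}\big((1+i)(u+iv)^p\big)\in\mathbb{Z}[u,v]$ (for real $u,v$); $u+\delta_4 v$ divides $G_p$ in $\mathbb{Z}[u,v]$, and $H_p(u,v):=G_p(u,v)/(u+\delta_4 v)\in\mathbb{Z}[u,v]$. $\mathbb{N}$ denotes the positive integers. *)

(* Defs.v *)
From HB Require Import structures.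
From mathcomp Require Import all_boot all_order all_algebra.
Set Implicit Arguments. Unset Strict Implicit. Unset Printing Implicit Defensive.
Import Order.TTheory GRing.Theory Num.Theory.
Local Open Scope ring_scope.

Definition delta4 (p : nat) : int := if (p %% 4 == 1)%N then 1 else -1.

(* Im((1+i)(u+iv)^p) = Re + Im of (u+iv)^p
   = sum_k (-1)^(floor(k/2)) C(p,k) u^(p-k) v^k. gcoef p k is the coefficient of
   u^(p-k) v^k in G_p. *)
Definition gcoef (p k : nat) : int := (-1) ^+ (k./2) * ('C(p, k))%:Z.

Definition G (p : nat) (u v : int) : int :=
  \sum_(k < p.+1) gcoef p k * u ^+ (p - k) * v ^+ k.

(* Coefficients of the quotient H_p = G_p / (u + delta4 v), computed by exact
   (synthetic) division of the homogeneous polynomial G_p by u + delta4 v: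
   h_0 = g_0, h_(j+1) = g_(j+1) - delta4 * h_j. *)
Fixpoint hcoef (p j : nat) : int :=
  match j with
  | 0 => gcoef p 0
  | j'.+1 => gcoef p j'.+1 - delta4 p * hcoef p j'
  end.

Definition H (p : nat) (u v : int) : int :=
  \sum_(j < p) hcoef p j * u ^+ (p.-1 - j) * v ^+ j.

(* Main.v *)
Require Import Defs.
From HB Require Import structures.
From mathcomp Require Import all_boot all_order all_algebra.
From mathcomp Require Import complex ring zify.
Import Order.TTheory GRing.Theory Num.Theory.
Local Open Scope ring_scope.
Import ComplexField.

Definition gint := complex int.
HB.instance Definition _ := GRing.Zmodule.on gint.
Lemma mul1ci : left_id (Complex (1:int) 0 : gint) (@mulc int).
Proof. by move=> [a b] /=; rewrite !mul1r !mul0r subr0 addr0. Qed.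
Lemma mulc_addli : left_distributive (@mulc int : gint -> gint -> gint) (@addc int).
Proof.
move=> [a b] [c d] [e f] /=; rewrite !mulrDl !opprD -!addrA.
by congr (Complex (_ + _) (_ + _)); rewrite addrCA.
Qed.
Lemma nonzero1ci : (Complex (1:int) 0 : gint) != Complex 0 0. Proof. by []. Qed.
HB.instance Definition _ := GRing.Zmodule_isComNzRing.Build gint
  (@mulcA int) (@mulcC int) mul1ci mulc_addli nonzero1ci.

Definition cI (a b : int) : gint := Complex a b.

Lemma cI_mul a b c d : cI a b * cI c d = cI (a*c - b*d) (a*d + b*c).
Proof. by []. Qed.
Lemma cI_add a b c d : cI a b + cI c d = cI (a+c) (b+d).
Proof. by []. Qed.

Definition imc (x : gint) : int := complex.Im x.
Lemma imcD x y : imc (x + y) = imc x + imc y. Proof. by case: x; case: y. Qed.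
Lemma imc0 : imc 0 = 0. Proof. by []. Qed.
Lemma imc_sum n (F : 'I_n -> gint) : imc (\sum_(i < n) F i) = \sum_(i < n) imc (F i).
Proof.
elim: n F => [|n IH] F; first by rewrite !big_ord0.
by rewrite !big_ord_recr /= imcD IH.
Qed.
Lemma imcMn x n : imc (x *+ n) = imc x *+ n.
Proof. by elim: n => [|n IH]; rewrite ?mulr0n // !mulrS imcD IH. Qed.
Lemma imcMr x c : imc (x * cI c 0) = imc x * c.
Proof. by case: x => a b; rewrite /imc /= mulr0 add0r. Qed.
Lemma cI_real_exp c n : (cI c 0) ^+ n = cI (c ^+ n) 0.
Proof.
elim: n => [|n IH]; first by rewrite expr0.
by rewrite exprS IH cI_mul !mulr0 mul0r subr0 addr0 exprS.
Qed.
Lemma cI_realM c d : cI c 0 * cI d 0 = cI (c * d) 0.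
Proof. by rewrite cI_mul !mulr0 mul0r subr0 addr0. Qed.

Lemma imc_ipow k : imc (cI 1 1 * (cI 0 1) ^+ k) = (-1) ^+ (k./2).
Proof.
suff: imc (cI 1 1 * (cI 0 1) ^+ k) = (-1) ^+ (k./2) /\
      imc (cI 1 1 * (cI 0 1) ^+ k.+1) = (-1) ^+ (k.+1./2) by case.
elim: k => [|k [IH IH1]]; first by split.
split => //.
have -> : (cI 0 1) ^+ k.+2 = (cI 0 1) ^+ k * cI (-1) 0.
  by rewrite -addn2 exprD.
rewrite mulrA imcMr.
have -> : (k.+2)./2 = (k./2).+1 by [].
by rewrite exprS IH mulrN1 mulN1r.
Qed.

Lemma G_imc p u v : G p u v = imc (cI 1 1 * (cI u v) ^+ p).
Proof.
have -> : cI u v = cI u 0 + cI 0 1 * cI v 0.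
  by rewrite cI_mul cI_add !mul0r !mulr0 mul1r subr0 !add0r.
rewrite exprDn mulr_sumr imc_sum /G; apply: eq_bigr => k _.
rewrite mulrnAr imcMn exprMn !cI_real_exp.
rewrite [X in imc X](_ : _ = (cI 1 1 * cI 0 1 ^+ k) * (cI (u ^+ (p-k)) 0 * cI (v^+k) 0)); last by ring.
rewrite cI_realM imcMr imc_ipow /gcoef -mulr_natr natz; ring.
Qed.

Definition gam (d : int) n := imc (cI 1 1 * (cI (-d) 1) ^+ n).

Lemma G_expand p d u v : G p u v =
  \sum_(j < p.+1) ('C(p, j))%:Z * (u + d * v) ^+ j * v ^+ (p - j) * gam d (p - j).
Proof.
rewrite G_imc.
have -> : cI u v = cI (-d) 1 * cI v 0 + cI (u + d * v) 0.
  rewrite cI_mul cI_add; congr cI; ring.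
rewrite exprDn mulr_sumr imc_sum; apply: eq_bigr => j _.
rewrite mulrnAr imcMn exprMn !cI_real_exp.
rewrite [X in imc X](_ : _ = (cI 1 1 * cI (-d) 1 ^+ (p - j)) * (cI (v ^+ (p-j)) 0 * cI ((u + d * v)^+j) 0)); last by ring.
rewrite cI_realM imcMr /gam -mulr_natr natz; ring.
Qed.

Lemma div_gen p u v n :
  \sum_(k < n.+1) gcoef p k * u ^+ (n - k) * v ^+ k =
  (u + delta4 p * v) * \sum_(j < n) hcoef p j * u ^+ (n.-1 - j) * v ^+ j
  + hcoef p n * v ^+ n.
Proof.
elim: n => [|n IH].
  by rewrite big_ord1 big_ord0 /= !expr0 !mulr1 mulr0 add0r.
rewrite big_ord_recr /= subnn expr0 mulr1.
rewrite (eq_bigr (fun k : 'I_n.+1 => u * (gcoef p k * u ^+ (n - k) * v ^+ k))); last first.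
  move=> k _; have hk : (k <= n)%N := ltn_ord k.
  rewrite (subSn hk) exprS. ring.
rewrite -mulr_sumr IH [in RHS]big_ord_recr /= subnn expr0 mulr1.
rewrite [in RHS](eq_bigr (fun j : 'I_n => u * (hcoef p j * u ^+ (n.-1 - j) * v ^+ j))); last first.
  move=> j _; have hj := ltn_ord j.
  have -> : (n - j = (n.-1 - j).+1)%N.
    by move: hj; case: n {IH} j => // n j hj; rewrite subSn.
  rewrite exprS; ring.
rewrite -mulr_sumr (exprS v n).
move: (\sum_(j < n) _) (hcoef p n) (gcoef p n.+1) (delta4 p) (v ^+ n) => S a b c w.
ring.
Qed.


Lemma lt_pow3 j : (j.+2 < 3 ^ j.+1)%N.
Proof. elim: j => // j IH; rewrite expnS; lia. Qed.

Lemma logn_small j : (logn 3 (j.+2 * j.+1) <= j)%N.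
Proof.
set L := logn 3 _.
have hd := pfactor_dvdnn 3 (j.+2 * j.+1); rewrite -/L in hd.
suff : (3 ^ L <= j.+2)%N.
  move=> h; have := leq_ltn_trans h (lt_pow3 j).
  by rewrite ltn_exp2l.
case: (boolP (3 %| j.+1)%N) => h3.
  have c : coprime (3 ^ L) j.+2.
    apply: coprimeXl; rewrite prime_coprime //.
    by rewrite -[j.+2]addn1 dvdn_addr.
  rewrite Gauss_dvdr // in hd.
  by apply: leq_trans (dvdn_leq _ hd) _.
have c : coprime (3 ^ L) j.+1 by apply: coprimeXl; rewrite prime_coprime.
rewrite Gauss_dvdl // in hd.
exact: dvdn_leq.
Qed.

Lemma bin3 n j e : (3 ^ e %| n)%N -> (j.+1 <= n)%N ->
  (3 ^ e.+1 %| 'C(n.+1, j.+2) * 3 ^ j.+1)%N.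
Proof.
move=> he hj.
set C := 'C(n.+1, j.+2).
have C0 : (0 < C)%N by rewrite bin_gt0 ltnS.
have key : (j.+2 * j.+1 * C = n.+1 * n * 'C(n.-1, j))%N.
  have h1 := mul_bin_diag n.+1 j.+1.
  have h2 := mul_bin_diag n j.
  rewrite /= in h1.
  by rewrite /C [(j.+2 * j.+1)%N]mulnC -mulnA -h1 mulnCA -h2 mulnA.
have hdiv : (3 ^ e %| j.+2 * j.+1 * C)%N.
  by rewrite key; apply: dvdn_mulr; apply: dvdn_mull.
have hC3 : (0 < C * 3 ^ j.+1)%N by rewrite muln_gt0 C0 expn_gt0.
have hP : (0 < j.+2 * j.+1 * C)%N by rewrite !muln_gt0 C0.
rewrite pfactor_dvdn // in hdiv; rewrite pfactor_dvdn //.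
rewrite lognM // ?expn_gt0 // pfactorK //.
rewrite lognM // in hdiv.
have := logn_small j; lia.
Qed.

Lemma pow3 (x : int) e : (3 %| x - 1)%Z -> ((3 ^ e.+1)%N%:Z %| x ^+ (3 ^ e) - 1)%Z.
Proof.
move=> h; elim: e => [|e IH]; first by rewrite expn1 expr1.
rewrite expnSr exprM.
move: IH; set y := x ^+ (3 ^ e) => /dvdzP [z hz].
have -> : y = 1 + z * (3 * (3 ^ e)%N%:Z).
  by rewrite -[_ * _%:Z]PoszM -expnS -hz; ring.
apply/dvdzP; exists (z + 3 * (3 ^ e)%N%:Z * z ^+ 2 + 3 * (3 ^ e)%N%:Z ^+ 2 * z ^+ 3).
rewrite !expnS !PoszM; ring.
Qed.

Lemma powL (x : int) e n : (3 %| x - 1)%Z -> (3 ^ e %| n)%N ->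
  ((3 ^ e.+1)%N%:Z %| x ^+ n - 1)%Z.
Proof.
move=> h /dvdnP [k ->]; rewrite mulnC exprM.
have -> : x ^+ (3 ^ e) ^+ k - 1 = x ^+ (3 ^ e) ^+ k - 1 ^+ k by rewrite expr1n.
by rewrite subrXX; apply: dvdz_mulr; apply: pow3.
Qed.

Lemma sq3 (v : int) : ~~ (3 %| v)%Z -> (3 %| v ^+ 2 - 1)%Z.
Proof.
move=> h.
have hv := divz_eq v 3.
have r0 : 0 <= (v %% 3)%Z by apply: modz_ge0.
have r3 : (v %% 3)%Z < 3 by apply: ltz_pmod.
have rn : (v %% 3)%Z != 0 by apply/negP => /eqP /dvdz_mod0P; apply/negP.
move: hv r0 r3 rn; set q := (v %/ 3)%Z; set r := (v %% 3)%Z => hv r0 r3 rn.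
have [hr|hr] : r = 1 \/ r = 2 by lia.
  by rewrite hv hr; apply/dvdzP; exists (3 * q ^+ 2 + 2 * q); ring.
by rewrite hv hr; apply/dvdzP; exists (3 * q ^+ 2 + 4 * q + 1); ring.
Qed.

Lemma div_G p u v :
  G p u v = (u + delta4 p * v) * H p u v + hcoef p p * v ^+ p.
Proof. exact: div_gen. Qed.

Lemma Pexp3 n : (3:int) ^+ n = (3 ^ n)%N%:Z.
Proof. by elim: n => // n IH; rewrite exprS IH expnS PoszM. Qed.

Definition Tsum p (s v : int) :=
  \sum_(j < p) ('C(p, j.+1))%:Z * s ^+ j * v ^+ (p - j.+1) * gam (delta4 p) (p - j.+1).

Lemma G_T p u v : gam (delta4 p) p = 0 ->
  G p u v = (u + delta4 p * v) * Tsum p (u + delta4 p * v) v.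
Proof.
move=> g0; rewrite (G_expand p (delta4 p)) big_ord_recl /= subn0 g0 mulr0 add0r.
rewrite /Tsum mulr_sumr; apply: eq_bigr => j _.
rewrite /bump /= exprS.
move: (u + _) => s.
move: (('C(p, j.+1))%:Z) (s ^+ j) (v ^+ (p - j.+1)) (gam (delta4 p) (p - j.+1)) => a b c w.
ring.
Qed.

Lemma H_T p u v : (0 < p)%N -> gam (delta4 p) p = 0 -> u + delta4 p * v != 0 ->
  H p u v = Tsum p (u + delta4 p * v) v.
Proof.
move=> p0 g0 s0.
have hr : hcoef p p = 0.
  have := div_G p (- delta4 p) 1.
  rewrite G_T // mulr1 addNr !mul0r add0r expr1n mulr1.
  by move=> <-.
have := div_G p u v; rewrite G_T // hr mul0r addr0.
by move/mulfI => ->.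
Qed.

Lemma gamA k : gam 1 (4 * k) = (-4) ^+ k /\ gam 1 (4 * k).+1 = 0.
Proof.
rewrite /gam.
have h4 : (cI (-1) 1) ^+ 4 = cI (-4) 0 by rewrite !exprS expr0.
rewrite exprSr exprM h4 cI_real_exp.
split; first by rewrite imcMr mul1r.
rewrite mulrCA mulrC.
have -> : cI 1 1 * cI (-1) 1 = cI (-2) 0 by [].
by rewrite imcMr mul0r.
Qed.

Lemma gamB k : gam (-1) (4 * k + 2) = 2 * (-4) ^+ k /\ gam (-1) (4 * k + 2).+1 = 0.
Proof.
rewrite -addnS /gam opprK.
have h4 : (cI 1 1) ^+ 4 = cI (-4) 0 by rewrite !exprS expr0.
rewrite (exprD _ (4 * k) 2) (exprD _ (4 * k) 3) !exprM h4 cI_real_exp.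
split.
  rewrite mulrCA.
  have -> : cI 1 1 * cI 1 1 ^+ 2 = cI (-2) 2 by rewrite !exprS expr0.
  by rewrite mulrC imcMr.
rewrite mulrCA.
have -> : cI 1 1 * cI 1 1 ^+ 3 = cI (-4) 0 by rewrite !exprS expr0.
by rewrite imcMr mul0r.
Qed.

Lemma core q m (u v : int) e w eps : (0 < m)%N -> (3 ^ e %| q)%N ->
  gam (delta4 q.+1) q.+1 = 0 -> gam (delta4 q.+1) q = w ->
  ((3 ^ e.+1)%N%:Z %| w - eps)%Z -> ((3 ^ e.+1)%N%:Z %| v ^+ q - 1)%Z ->
  u + delta4 q.+1 * v = 3 ^+ m -> H q.+1 u v = 1 ->
  ((3 ^ e.+1)%N%:Z %| (q.+1)%:Z * eps - 1)%Z.
Proof.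
move=> m0 he g0 gw hw hA hs hH.
have s0 : u + delta4 q.+1 * v != 0 by rewrite hs expf_neq0.
rewrite H_T // hs /Tsum big_ord_recl /= in hH.
rewrite subn1 /= bin1 expr0 mulr1 gw in hH.
move: hH; set R := \sum_(i < q) _ => hH.
have hR : ((3 ^ e.+1)%N%:Z %| R)%Z.
  rewrite /R; apply: rpred_sum => i _.
  rewrite /bump /= add1n; apply: dvdz_mulr; apply: dvdz_mulr.
  rewrite -exprM Pexp3 -PoszM dvdzE /=.
  apply: dvdn_trans (bin3 q i e he (ltn_ord i)) _.
  apply: dvdn_mul => //; apply: dvdn_exp2l.
  by rewrite leq_pmull.
have -> : (q.+1)%:Z * eps - 1 =
  - ((q.+1)%:Z * (w - eps)) - (q.+1)%:Z * w * (v ^+ q - 1) - R.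
  have gen : forall a b c x y : int, a * b * x + c = 1 ->
      a * y - 1 = - (a * (x - y)) - a * x * (b - 1) - c.
    move=> a b c x y h.
    have -> : c = 1 - a * b * x by rewrite -h; ring.
    ring.
  exact: gen hH.
apply: rpredB; last exact: hR.
apply: rpredB; first by rewrite rpredN; apply: dvdz_mull.
by apply: dvdz_mull.
Qed.

Lemma idA n : (n.+1)%:Z * -1 - 1 = - (n.+2)%:Z. Proof. lia. Qed.
Lemma idB n : (n.+1)%:Z - 1 = n%:Z. Proof. lia. Qed.
Lemma finA k : (3 %| (4*k).+2)%N -> (k %% 2 = 1)%N -> ((4*k).+1 %% 24 = 5)%N.
Proof. lia. Qed.
Lemma finB k : (3 %| (4*k+2).+2)%N -> (k %% 2 = 0)%N -> ((4*k+2).+1 %% 24 = 11)%N.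
Proof. lia. Qed.

Lemma three_dvdE e : (3 %| (3 ^ e.+1)%N%:Z)%Z.
Proof. by rewrite dvdzE /= expnS dvdn_mulr. Qed.

Theorem lemma9 (p m : nat) (u v : int) :
  prime p -> (5 <= p)%N -> (0 < m)%N ->
  gcdz u v = 1 ->
  u + delta4 p * v = 3 ^+ m ->
  H p u v = 1 ->
  (p %% 24 = 5)%N \/ (p %% 24 = 11)%N.
Proof.
move=> pp p5 m0 hg hs hH.
have hodd : odd p by case: (even_prime pp) => // h; rewrite h in p5.
have [q hq] : exists q, p = q.+1 by exists p.-1; rewrite prednK // prime_gt0.
subst p.
set e := logn 3 q.
have q0 : (0 < q)%N by lia.
have he : (3 ^ e %| q)%N := pfactor_dvdnn 3 q.
have hne : ~~ (3 ^ e.+1 %| q)%N by rewrite pfactor_dvdn // -/e ltnn.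
have s3 : (3 %| u + delta4 q.+1 * v)%Z.
  rewrite hs; case: m m0 {hs hH} => // m' _; rewrite exprS; apply: dvdz_mulr; exact: dvdzz.
have hv3 : ~~ (3 %| v)%Z.
  apply/negP => h3.
  have hu3 : (3 %| u)%Z.
    by have := rpredB s3 (dvdz_mull (delta4 q.+1) h3); rewrite addrK.
  have : (3 %| gcdz u v)%Z by rewrite dvdz_gcd hu3 h3.
  by rewrite hg.
have hv2 := sq3 v hv3.
have c2 : coprime (3 ^ e) 2 by apply: coprimeXl; rewrite prime_coprime.
have c4 : coprime (3 ^ e) 4 by apply: coprimeXl; rewrite prime_coprime.
have h2 := modn2 q.+1; rewrite hodd /= in h2.
have [h4|h4] : (q.+1 %% 4 = 1 \/ q.+1 %% 4 = 3)%N by lia.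
- set k := (q %/ 4)%N.
  have hk : q = (4 * k)%N by lia.
  have hd : delta4 q.+1 = 1 by rewrite /delta4 h4.
  have [gq gp] := gamA k.
  have hk3 : (3 ^ e %| k)%N by move: he; rewrite hk Gauss_dvdr.
  have hw : ((3 ^ e.+1)%N%:Z %| (-4) ^+ k - (-1) ^+ k)%Z.
    have -> : (-4 : int) ^+ k = (-1) ^+ k * 4 ^+ k by rewrite -exprMn mulN1r.
    rewrite -{2}(mulr1 ((-1) ^+ k)) -mulrBr; apply: dvdz_mull.
    exact: powL.
  have hA : ((3 ^ e.+1)%N%:Z %| v ^+ q - 1)%Z.
    rewrite hk (_ : (4 * k = 2 * (2 * k))%N); last by rewrite mulnA.
    by rewrite exprM; apply: powL => //; apply: dvdn_mull.
  have := @core q m u v e ((-4) ^+ k) ((-1) ^+ k) m0 he _ _ hw hA hs hH.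
  rewrite hd hk gp gq => /(_ erefl erefl).
  have k2 := modn2 k.
  case: (boolP (odd k)) => ok; rewrite -signr_odd ?ok ?(negbTE ok) /= in k2 *.
  + rewrite expr1 => hE.
    have := dvdz_trans (three_dvdE e) hE.
    rewrite idA rpredN dvdzE /= => h3; left; exact: finA.
  + rewrite expr0 mulr1 => hE.
    rewrite idB in hE.
    by rewrite dvdzE /= -hk (negbTE hne) in hE.
- set k := (q %/ 4)%N.
  have hk : q = (4 * k + 2)%N by lia.
  have hd : delta4 q.+1 = -1 by rewrite /delta4 h4.
  have [gq gp] := gamB k.
  have hk1 : (q = 2 * (2 * k + 1))%N by lia.
  have hk3 : (3 ^ e %| 2 * k + 1)%N by move: he; rewrite hk1 Gauss_dvdr.
  have hw : ((3 ^ e.+1)%N%:Z %| 2 * (-4) ^+ k - - (-1) ^+ k)%Z.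
    have -> : 2 * (-4 : int) ^+ k - - (-1) ^+ k =
        (-1) ^+ k * (- ((-2) ^+ (2 * k + 1) - 1)).
      rewrite exprD exprM (_ : (-2 : int) ^+ 2 = 4) // expr1.
      rewrite (_ : (-4 : int) ^+ k = (-1) ^+ k * 4 ^+ k); last by rewrite -exprMn mulN1r.
      move: ((-1 : int) ^+ k) (4 ^+ k : int) => a b; ring.
    apply: dvdz_mull; rewrite rpredN.
    exact: powL.
  have hA : ((3 ^ e.+1)%N%:Z %| v ^+ q - 1)%Z.
    by rewrite hk1 exprM; apply: powL.
  have := @core q m u v e (2 * (-4) ^+ k) (- (-1) ^+ k) m0 he _ _ hw hA hs hH.
  rewrite hd hk gp gq => /(_ erefl erefl).
  have k2 := modn2 k.
  case: (boolP (odd k)) => ok; rewrite -signr_odd ?ok ?(negbTE ok) /= in k2 *.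
  + rewrite expr1 opprK mulr1 => hE.
    rewrite idB in hE.
    by rewrite dvdzE /= -hk (negbTE hne) in hE.
  + rewrite expr0 => hE.
    have := dvdz_trans (three_dvdE e) hE.
    rewrite idA rpredN dvdzE /= => h3; right; exact: finB.
Qed.
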